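(* Let $(\Omega,\mathcal A)$ be a Borel space, $(\Omega,X_\bullet)$ a Borel field of proper metric spaces, and $x^0_\bullet\in\mathcal L(\Omega,X_\bullet)$. For each $\omega$ equip $\mathcal C(X_\omega)$ (real continuous functions) with the metric $\delta_\omega(f,g)=\inf\{\varepsilon>0\mid\sup_{x\in B(x^0_\omega,1/\varepsilon)}|f(x)-g(x)|<\varepsilon\}$. Then $\mathcal L(\Omega,\mathcal C(X_\bullet)):=\{f_\bullet\in\mathcal S(\Omega,\mathcal C(X_\bullet))\mid \omega\mapsto f_\omega(x_\omega)\text{ is Borel for every }x_\bullet\in\mathcal L(\Omega,X_\bullet)\}$ is a Borel structure on the field $(\mathcal C(X_\omega),\delta_\omega)_{\omega\in\Omega}$. Moreover the subfield $\mathcal C_0(X_\bullet)$, $\mathcal C_0(X_\omega)=\{f\in\mathcal C(X_\omega)\mid f(x^0_\omega)=0\}$, is a Borel subfield.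
   Context: Borel field of metric spaces: $(X_\omega,d_\omega)_{\omega\in\Omega}$ metric spaces; a section is $x_\bullet=(x_\omega)$, $x_\omega\in X_\omega$; $\mathcal S(\cdot)$ denotes sets of sections. A Borel structure is a set $\mathcal L(\Omega,X_\bullet)$ of sections such that (a) $\omega\mapsto d_\omega(x_\omega,y_\omega)$ is Borel for all $x_\bullet,y_\bullet\in\mathcal L$; (b) any section $y_\bullet$ with $\omega\mapsto d_\omega(x_\omega,y_\omega)$ Borel for all $x_\bullet\in\mathcal L$ lies in $\mathcal L$; (c) there is a countable $\mathcal D=\{x^n_\bullet\}\subseteq\mathcal L$ (fundamental family) with $\{x^n_\omega\}_n$ dense in $X_\omega$ for all $\omega$. For Borel $\Omega'$, $\mathcal L(\Omega',X_\bullet)$ = restrictions to $\Omega'$ of Borel sections. A subfield is $A_\bullet=(A_\omega)$ with $A_\omega\subseteq X_\omega$ (possibly empty); it is Borel if $\Omega'=\{\omega:A_\omega\ne\emptyset\}\in\mathcal A$ and there are countably many $y^n_\bullet\in\mathcal L(\Omega',X_\bullet)$ with $y^n_\omega\in A_\omega$ and $A_\omega\subseteq\overline{\{y^n_\omega\}_n}$ for all $\omega\in\Omega'$. A metric space is proper if closed balls are compact; $B(x,r)$ is the open ball. *)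

(* Defs.v *)
From Stdlib Require Import Reals List ClassicalEpsilon.
Open Scope R_scope.


Definition sigma_algebra {O : Type} (A : (O -> Prop) -> Prop) : Prop :=
  A (fun _ => True) /\
  (forall S, A S -> A (fun w => ~ S w)) /\
  (forall S : nat -> O -> Prop, (forall n, A (S n)) -> A (fun w => exists n, S n w)).

Definition R_open (U : R -> Prop) : Prop :=
  forall x, U x -> exists e, 0 < e /\ forall y, Rabs (y - x) < e -> U y.

Definition borel_R (B : R -> Prop) : Prop :=
  forall S, sigma_algebra S -> (forall U, R_open U -> S U) -> S B.

Definition borel_fun {O : Type} (A : (O -> Prop) -> Prop) (f : O -> R) : Prop :=
  forall B, borel_R B -> A (fun w => B (f w)).

Definition is_metric {T : Type} (d : T -> T -> R) : Prop :=
  (forall x y, d x y = 0 <-> x = y) /\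
  (forall x y, d x y = d y x) /\
  (forall x y z, d x z <= d x y + d y z).

Record MetricSpace := {
  carrier :> Type;
  mdist : carrier -> carrier -> R;
  dist_metric : is_metric mdist }.

Definition open_ball {X : MetricSpace} (x : X) (r : R) : X -> Prop :=
  fun y => mdist X x y < r.
Definition closed_ball {X : MetricSpace} (x : X) (r : R) : X -> Prop :=
  fun y => mdist X x y <= r.

Definition is_open {X : MetricSpace} (U : X -> Prop) : Prop :=
  forall x, U x -> exists r, 0 < r /\ forall y, open_ball x r y -> U y.

Definition compact {X : MetricSpace} (K : X -> Prop) : Prop :=
  forall (I : Type) (U : I -> X -> Prop),
    (forall i, is_open (U i)) ->
    (forall x, K x -> exists i, U i x) ->
    exists l : list I, forall x, K x -> exists i, In i l /\ U i x.

Definition proper (X : MetricSpace) : Prop :=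
  forall (x : X) (r : R), compact (closed_ball x r).

Definition continuous {X : MetricSpace} (f : X -> R) : Prop :=
  forall x e, 0 < e -> exists dl, 0 < dl /\
    forall y, mdist X x y < dl -> Rabs (f y - f x) < e.

Definition Cfun (X : MetricSpace) : Type := { f : X -> R | continuous f }.
Definition Cfun_app {X : MetricSpace} (f : Cfun X) : X -> R := proj1_sig f.

Section BorelField.
Variables (O : Type) (A : (O -> Prop) -> Prop).
Variables (T : O -> Type) (d : forall w, T w -> T w -> R).

Definition section := forall w, T w.

Definition countable_set (D : section -> Prop) : Prop :=
  exists c : section -> nat, forall s t, D s -> D t -> c s = c t -> s = t.

Definition is_borel_structure (L : section -> Prop) : Prop :=
  (forall x y, L x -> L y -> borel_fun A (fun w => d w (x w) (y w))) /\
  (forall y : section,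
      (forall x, L x -> borel_fun A (fun w => d w (x w) (y w))) -> L y) /\
  (exists D : section -> Prop,
      countable_set D /\ (forall s, D s -> L s) /\
      forall w (x : T w) e, 0 < e -> exists s, D s /\ d w (s w) x < e).

(** Borel subfields with respect to a Borel structure L; a section of
    L(O', T) is represented as a Borel section, only considered on O'. *)
Definition borel_subfield (L : section -> Prop) (Asub : forall w, T w -> Prop) : Prop :=
  A (fun w => exists a, Asub w a) /\
  exists y : nat -> section,
    (forall n, L (y n)) /\
    forall w, (exists a, Asub w a) ->
      (forall n, Asub w (y n w)) /\
      (forall a, Asub w a -> forall e, 0 < e -> exists n, d w (y n w) a < e).
End BorelField.

Definition is_glb (S : R -> Prop) (m : R) : Prop :=
  (forall x, S x -> m <= x) /\ (forall m', (forall x, S x -> m' <= x) -> m' <= m).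

Definition Inf (S : R -> Prop) : R := epsilon (inhabits 0) (is_glb S).

(** delta_w(f,g) = inf { e > 0 | sup_{x in B(x0, 1/e)} |f x - g x| < e };
    "sup_{x in B} h x < e" is written out as: some eta < e bounds h on B. *)
Definition delta {X : MetricSpace} (x0 : X) (f g : Cfun X) : R :=
  Inf (fun e => 0 < e /\
         exists eta, eta < e /\
           forall x, open_ball x0 (/ e) x ->
             Rabs (Cfun_app f x - Cfun_app g x) <= eta).

Arguments section {O} T.
Arguments countable_set {O T}.
Arguments is_borel_structure {O} A {T} d L.
Arguments borel_subfield {O} A {T} d L Asub.

(* Main.v *)
Require Import Defs.
From Stdlib Require Import Reals Lra List ClassicalEpsilon Classical
  FunctionalExtensionality PropExtensionality ProofIrrelevance Cantor ZArith Lia.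
Open Scope R_scope.

Section Meas.
Variables (O : Type) (A : (O -> Prop) -> Prop) (HA : sigma_algebra A).

Lemma A_ext (P Q : O -> Prop) : (forall w, P w <-> Q w) -> A P -> A Q.
Proof.
  intros H HP. replace Q with P; auto.
  apply functional_extensionality; intro w; apply propositional_extensionality; auto.
Qed.

Lemma A_True : A (fun _ => True).
Proof. apply HA. Qed.

Lemma A_compl P : A P -> A (fun w => ~ P w).
Proof. apply HA. Qed.

Lemma A_ex (P : nat -> O -> Prop) : (forall n, A (P n)) -> A (fun w => exists n, P n w).
Proof. apply HA. Qed.

Lemma A_False : A (fun _ => False).
Proof. apply (A_ext (fun _ => ~ True)). tauto. apply A_compl, A_True. Qed.

Lemma A_const (P : Prop) : A (fun _ => P).
Proof.
  destruct (classic P).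
  - apply (A_ext (fun _ => True)). tauto. apply A_True.
  - apply (A_ext (fun _ => False)). tauto. apply A_False.
Qed.

Lemma A_or P Q : A P -> A Q -> A (fun w => P w \/ Q w).
Proof.
  intros HP HQ.
  apply (A_ext (fun w => exists n, (match n with 0%nat => P | _ => Q end) w)).
  - intro w; split.
    + intros [[|n] H]; auto.
    + intros [H|H]. exists 0%nat; auto. exists 1%nat; auto.
  - apply A_ex. intros [|n]; auto.
Qed.

Lemma A_and P Q : A P -> A Q -> A (fun w => P w /\ Q w).
Proof.
  intros HP HQ. apply (A_ext (fun w => ~ (~ P w \/ ~ Q w))).
  - intro w; tauto.
  - apply A_compl, A_or; apply A_compl; auto.
Qed.

Lemma A_all (P : nat -> O -> Prop) : (forall n, A (P n)) -> A (fun w => forall n, P n w).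
Proof.
  intros H. apply (A_ext (fun w => ~ exists n, ~ P n w)).
  - intro w; split.
    + intros H1 n. apply NNPP; intro H2; apply H1; eauto.
    + intros H1 [n H2]; auto.
  - apply A_compl, A_ex; intro n; apply A_compl; auto.
Qed.

Lemma A_and_const (P : Prop) Q : A Q -> A (fun w => P /\ Q w).
Proof. intros; apply A_and; auto using A_const. Qed.

Definition SM (h : O -> R) := forall c, A (fun w => h w < c).

Lemma SM_gt h : SM h -> forall c, A (fun w => c < h w).
Proof.
  intros H c.
  apply (A_ext (fun w => exists k, ~ (h w < c + / (INR k + 1)))).
  - intro w; split.
    + intros [k Hk]. assert (0 < / (INR k + 1)).
      { apply Rinv_0_lt_compat. pose proof (pos_INR k); lra. } lra.
    + intros Hw. destruct (archimed (/ (h w - c))) as [H1 _].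
      assert (Hp : 0 < h w - c) by lra.
      exists (Z.to_nat (up (/ (h w - c)))).
      rewrite INR_IZR_INZ, Z2Nat.id.
      2:{ apply le_IZR. pose proof (Rinv_0_lt_compat _ Hp). lra. }
      assert (/ (IZR (up (/ (h w - c))) + 1) < h w - c).
      { assert (0 < / (h w - c)) by (apply Rinv_0_lt_compat; lra).
        apply Rlt_le_trans with (/ (/ (h w - c))).
        apply Rinv_lt_contravar. nra. lra. rewrite Rinv_inv; lra. }
      lra.
  - apply A_ex; intro k; apply A_compl, H.
Qed.

Lemma SM_le h : SM h -> forall c, A (fun w => h w <= c).
Proof.
  intros H c. apply (A_ext (fun w => ~ (c < h w))). intro; lra.
  apply A_compl, SM_gt, H.
Qed.

Lemma borel_SM h : borel_fun A h -> SM h.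
Proof.
  intros H c. apply (H (fun y => y < c)).
  intros S HS HU. apply HU. intros x Hx. exists (c - x). split. lra.
  intros y Hy. apply Rabs_def2 in Hy. lra.
Qed.

End Meas.
Arguments SM {O} A h.
Arguments A_ext {O A}.
Arguments A_True {O A}.
Arguments A_compl {O A}.
Arguments A_ex {O A}.
Arguments A_False {O A}.
Arguments A_const {O A}.
Arguments A_or {O A}.
Arguments A_and {O A}.
Arguments A_all {O A}.
Arguments A_and_const {O A}.
Arguments SM_gt {O A}.
Arguments SM_le {O A}.
Arguments borel_SM {O A}.

Lemma nat_large (r : R) : exists N : nat, r < INR N.
Proof.
  destruct (archimed r) as [H1 _].
  exists (Z.to_nat (up r)).
  destruct (Z_le_gt_dec 0 (up r)).
  - rewrite INR_IZR_INZ, Z2Nat.id; auto.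
  - assert (Hg : (up r < 0)%Z) by lia. apply IZR_lt in Hg. pose proof (pos_INR (Z.to_nat (up r))). lra.
Qed.

Lemma Z_nat_pair (z : Z) : exists a b : nat, IZR z = INR a - INR b.
Proof.
  exists (Z.to_nat z), (Z.to_nat (- z)).
  rewrite !INR_IZR_INZ, <- minus_IZR. f_equal. lia.
Qed.

Lemma grid_approx (x : R) (m : nat) : exists a b : nat,
  (INR a - INR b) / (INR m + 1) <= x < (INR a - INR b) / (INR m + 1) + / (INR m + 1).
Proof.
  set (N := INR m + 1).
  assert (HN : 0 < N) by (unfold N; pose proof (pos_INR m); lra).
  destruct (archimed (x * N)) as [H1 H2].
  destruct (Z_nat_pair (up (x * N) - 1)) as [a [b Hab]].
  exists a, b. rewrite <- Hab, minus_IZR.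
  unfold Rdiv. split.
  - apply Rmult_le_reg_r with N; auto.
    rewrite Rmult_assoc, Rinv_l; lra.
  - apply Rmult_lt_reg_r with N; auto.
    rewrite Rmult_plus_distr_r, Rmult_assoc, Rinv_l; lra.
Qed.

Definition rq (n : nat) : R :=
  let (a, p) := Cantor.of_nat n in let (b, c) := Cantor.of_nat p in
  (INR a - INR b) / (INR c + 1).

Lemma inv_small (e : R) : 0 < e -> exists m : nat, / (INR m + 1) < e.
Proof.
  intros He. destruct (nat_large (/ e)) as [m Hm]. exists m.
  pose proof (pos_INR m).
  apply Rlt_le_trans with (/ / e). apply Rinv_lt_contravar.
  apply Rmult_lt_0_compat; [apply Rinv_0_lt_compat|]; lra. lra.
  rewrite Rinv_inv; lra.
Qed.

Lemma rq_dense (x e : R) : 0 < e -> exists n, Rabs (rq n - x) < e.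
Proof.
  intros He. destruct (inv_small e He) as [m Hm].
  destruct (grid_approx x m) as [a [b [H1 H2]]].
  exists (Cantor.to_nat (a, Cantor.to_nat (b, m))).
  unfold rq. rewrite !Cantor.cancel_of_to.
  apply Rabs_def1; lra.
Qed.

Section Meas2.
Variables (O : Type) (A : (O -> Prop) -> Prop) (HA : sigma_algebra A).

Lemma SM_borel h : SM A h -> borel_fun A h.
Proof.
  intros H B HB. apply (HB (fun B => A (fun w => B (h w)))).
  - split; [|split].
    + apply A_True; auto.
    + intros S HS. apply A_compl; auto.
    + intros S HS. apply A_ex; auto.
  - intros U HU. cbv beta.
    apply (A_ext (fun w => exists m a b : nat,
      (forall y, (INR a - INR b) / (INR m + 1) - / (INR m + 1) < y <
                 (INR a - INR b) / (INR m + 1) + / (INR m + 1) -> U y) /\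
      ((INR a - INR b) / (INR m + 1) - / (INR m + 1) < h w /\
        h w < (INR a - INR b) / (INR m + 1) + / (INR m + 1)))).
    + intro w; split.
      * intros [m [a [b [Hc Hi]]]]. apply Hc; auto.
      * intros Hw. destruct (HU _ Hw) as [e [He HUe]].
        destruct (inv_small (e / 2)) as [m Hm]. lra.
        destruct (grid_approx (h w) m) as [a [b [H1 H2]]].
        assert (0 < / (INR m + 1)) by (apply Rinv_0_lt_compat; pose proof (pos_INR m); lra).
        exists m, a, b. split.
        -- intros y Hy. apply HUe. apply Rabs_def1; lra.
        -- lra.
    + apply (A_ex HA); intro m; apply (A_ex HA); intro a; apply (A_ex HA); intro b.
      apply (A_and_const HA).
      apply A_and; auto. apply SM_gt; auto.
Qed.

Lemma SM_const (c0 : R) : SM A (fun _ => c0).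
Proof. intro c. apply A_const; auto. Qed.

Lemma SM_plus f g : SM A f -> SM A g -> SM A (fun w => f w + g w).
Proof.
  intros Hf Hg c.
  apply (A_ext (fun w => exists n, f w < rq n /\ g w < c - rq n)).
  - intro w; split.
    + intros [n [H1 H2]]; lra.
    + intros Hw. destruct (rq_dense (f w + (c - f w - g w) / 2) ((c - f w - g w) / 2)) as [n Hn].
      lra. exists n. apply Rabs_def2 in Hn. lra.
  - apply (A_ex HA); intro n; apply A_and; auto.
Qed.

Lemma SM_opp f : SM A f -> SM A (fun w => - f w).
Proof.
  intros Hf c. apply (A_ext (fun w => - c < f w)). intro; lra.
  apply SM_gt; auto.
Qed.

Lemma SM_scal (K : R) f : 0 <= K -> SM A f -> SM A (fun w => K * f w).
Proof.
  intros HK Hf c. destruct (Req_dec K 0) as [->|HK0].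
  - apply (A_ext (fun _ => 0 < c)). intro; split; intro; lra. apply A_const; auto.
  - apply (A_ext (fun w => f w < c / K)).
    + intro w. split; intro H.
      * apply Rmult_lt_compat_l with (r := K) in H; [|lra].
        unfold Rdiv in H. rewrite <- Rmult_assoc, (Rmult_comm K c), Rmult_assoc, Rinv_r in H; lra.
      * apply Rmult_lt_reg_l with K; [lra|]. unfold Rdiv.
        rewrite <- Rmult_assoc, (Rmult_comm K c), Rmult_assoc, Rinv_r; lra.
    + apply Hf.
Qed.

Lemma SM_min f g : SM A f -> SM A g -> SM A (fun w => Rmin (f w) (g w)).
Proof.
  intros Hf Hg c. apply (A_ext (fun w => f w < c \/ g w < c)).
  - intro w; unfold Rmin; destruct (Rle_dec (f w) (g w)); split; intro; try lra.
  - apply A_or; auto.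
Qed.

Lemma SM_abs f : SM A f -> SM A (fun w => Rabs (f w)).
Proof.
  intros Hf c. apply (A_ext (fun w => f w < c /\ - c < f w)).
  - intro w; split; intro H. apply Rabs_def1; tauto. apply Rabs_def2 in H; auto.
  - apply A_and; auto. apply SM_gt; auto.
Qed.

End Meas2.

Lemma glb_exists (S : R -> Prop) : (exists x, S x) -> (exists m, forall x, S x -> m <= x) ->
  exists m, is_glb S m.
Proof.
  intros [x Hx] [m Hm].
  destruct (completeness (fun y => S (- y))) as [l [Hl1 Hl2]].
  - exists (- m). intros y Hy. specialize (Hm _ Hy). lra.
  - exists (- x). rewrite Ropp_involutive; auto.
  - exists (- l). split.
    + intros y Hy. assert (- y <= l). apply Hl1. rewrite Ropp_involutive; auto. lra.
    + intros m' Hm'. assert (l <= - m'). apply Hl2. intros y Hy. specialize (Hm' _ Hy). lra. lra.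
Qed.

Lemma Inf_spec (S : R -> Prop) : (exists x, S x) -> (exists m, forall x, S x -> m <= x) ->
  is_glb S (Inf S).
Proof.
  intros H1 H2. unfold Inf. apply epsilon_spec. apply glb_exists; auto.
Qed.

Section MS.
Variable X : MetricSpace.

Lemma d_refl (x : X) : mdist X x x = 0.
Proof. destruct (dist_metric X) as [H _]. apply H; auto. Qed.
Lemma d_sym (x y : X) : mdist X x y = mdist X y x.
Proof. destruct (dist_metric X) as [_ [H _]]. apply H. Qed.
Lemma d_tri (x y z : X) : mdist X x z <= mdist X x y + mdist X y z.
Proof. destruct (dist_metric X) as [_ [_ H]]. apply H. Qed.
Lemma d_pos (x y : X) : 0 <= mdist X x y.
Proof.
  pose proof (d_tri x y x). rewrite d_refl, (d_sym y x) in H. lra.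
Qed.
Lemma d_eq0 (x y : X) : mdist X x y = 0 -> x = y.
Proof. destruct (dist_metric X) as [H _]. apply H. Qed.

Lemma list_nat_max (l : list nat) : exists N, forall k, In k l -> (k <= N)%nat.
Proof.
  induction l as [|a l [N HN]].
  - exists 0%nat; intros k [].
  - exists (Nat.max a N). intros k [->|Hk]. lia. specialize (HN k Hk). lia.
Qed.

Lemma cont_bounded (g : X -> R) (K : X -> Prop) : Defs.continuous g -> Defs.compact K ->
  exists M, 0 <= M /\ forall z, K z -> Rabs (g z) <= M.
Proof.
  intros Hg HK.
  destruct (HK nat (fun k z => Rabs (g z) < INR k)) as [l Hl].
  - intros k z Hz. destruct (Hg z (INR k - Rabs (g z))) as [dl [Hdl Hy]]. lra.
    exists dl. split; auto. intros y Hyz. specialize (Hy y Hyz).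
    pose proof (Rabs_triang_inv (g y) (g z)). lra.
  - intros z _. apply nat_large.
  - destruct (list_nat_max l) as [N HN]. exists (INR N). split. apply pos_INR.
    intros z Hz. destruct (Hl z Hz) as [k [Hk1 Hk2]].
    pose proof (le_INR _ _ (HN k Hk1)). lra.
Qed.

Lemma dist_lip (a y z : X) : Rabs (mdist X a y - mdist X a z) <= mdist X y z.
Proof.
  pose proof (d_tri a y z). pose proof (d_tri a z y). rewrite (d_sym z y) in H0.
  apply Rabs_le; lra.
Qed.

Variable x0 : X.

Definition Sd (f g : Cfun X) : R -> Prop := fun e => 0 < e /\
  exists eta, eta < e /\ forall x, open_ball x0 (/ e) x ->
    Rabs (Cfun_app f x - Cfun_app g x) <= eta.

Lemma delta_eq f g : delta x0 f g = Inf (Sd f g).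
Proof. reflexivity. Qed.

Lemma Sd_up f g e e' : Sd f g e -> e <= e' -> Sd f g e'.
Proof.
  intros [He [eta [H1 H2]]] Hee. split. lra. exists eta. split. lra.
  intros x Hx. apply H2. unfold open_ball in *.
  apply Rlt_le_trans with (/ e'); auto. apply Rinv_le_contravar; lra.
Qed.

Hypothesis Hprop : proper X.

Lemma Sd_nonempty f g : exists e, Sd f g e.
Proof.
  assert (Hc : Defs.continuous (fun z => Cfun_app f z - Cfun_app g z)).
  { intros z e He. destruct (proj2_sig f z (e/2)) as [d1 [Hd1 H1]]. lra.
    destruct (proj2_sig g z (e/2)) as [d2 [Hd2 H2]]. lra.
    exists (Rmin d1 d2). split. apply Rmin_glb_lt; auto.
    intros y Hy. specialize (H1 y). specialize (H2 y).
    assert (Hy1 : mdist X z y < d1) by (apply Rlt_le_trans with (Rmin d1 d2); auto; apply Rmin_l).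
    assert (Hy2 : mdist X z y < d2) by (apply Rlt_le_trans with (Rmin d1 d2); auto; apply Rmin_r).
    specialize (H1 Hy1). specialize (H2 Hy2). unfold Cfun_app in *.
    apply Rabs_def2 in H1. apply Rabs_def2 in H2. apply Rabs_def1; lra. }
  destruct (cont_bounded _ _ Hc (Hprop x0 1)) as [M [HM HMb]].
  exists (M + 1). split. lra. exists M. split. lra.
  intros x Hx. apply HMb. unfold closed_ball, open_ball in *.
  assert (/ (M + 1) <= 1).
  { rewrite <- Rinv_1. apply Rinv_le_contravar; lra. } lra.
Qed.

Lemma delta_glb f g : is_glb (Sd f g) (delta x0 f g).
Proof.
  apply Inf_spec. apply Sd_nonempty. exists 0. intros x [Hx _]. lra.
Qed.

Lemma delta_nonneg f g : 0 <= delta x0 f g.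
Proof. apply (proj2 (delta_glb f g)). intros x [Hx _]; lra. Qed.

Lemma delta_le f g e : Sd f g e -> delta x0 f g <= e.
Proof. intros H. apply (proj1 (delta_glb f g)); auto. Qed.

Lemma delta_lt f g c : delta x0 f g < c -> exists e, Sd f g e /\ e < c.
Proof.
  intros H. apply NNPP. intro Hn.
  assert (c <= delta x0 f g).
  { apply (proj2 (delta_glb f g)). intros x Hx. apply Rnot_lt_le. intro Hxc. apply Hn; eauto. }
  lra.
Qed.

Lemma Sd_close f g e : Sd f g e -> forall x, mdist X x0 x < / e ->
  Rabs (Cfun_app f x - Cfun_app g x) < e.
Proof.
  intros [He [eta [H1 H2]]] x Hx. specialize (H2 x Hx). lra.
Qed.

Lemma delta_close f g c : delta x0 f g < c -> forall x, mdist X x0 x < / c ->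
  Rabs (Cfun_app f x - Cfun_app g x) < c.
Proof.
  intros H x Hx. destruct (delta_lt _ _ _ H) as [e [He Hec]].
  assert (0 < e) by apply He.
  apply Rlt_trans with e; auto. apply (Sd_close _ _ _ He).
  apply Rlt_trans with (/ c); auto. apply Rinv_lt_contravar; auto. nra.
Qed.

Lemma delta_metric : is_metric (delta x0).
Proof.
  split; [|split].
  - intros f g. split.
    + intros H0.
      assert (Hpt : forall x, Cfun_app f x = Cfun_app g x).
      { intro x. apply NNPP. intro Hne.
        assert (Ha : 0 < Rabs (Cfun_app f x - Cfun_app g x)) by (apply Rabs_pos_lt; lra).
        pose (c := Rmin (Rabs (Cfun_app f x - Cfun_app g x)) (/ (mdist X x0 x + 1))).
        pose proof (d_pos x0 x).
        assert (Hc0 : 0 < c). { apply Rmin_glb_lt; auto. apply Rinv_0_lt_compat; lra. }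
        assert (Hcl : c <= Rabs (Cfun_app f x - Cfun_app g x)) by apply Rmin_l.
        assert (Hcr : c <= / (mdist X x0 x + 1)) by apply Rmin_r.
        assert (Hx : mdist X x0 x < / c).
        { apply Rlt_le_trans with (mdist X x0 x + 1). lra.
          rewrite <- (Rinv_inv (mdist X x0 x + 1)). apply Rinv_le_contravar; auto. }
        assert (Hd : delta x0 f g < c) by lra.
        pose proof (delta_close _ _ c Hd x Hx). lra. }
      destruct f as [f Hf]; destruct g as [g Hg]. unfold Cfun_app in Hpt; simpl in Hpt.
      assert (f = g) by (apply functional_extensionality; auto).
      subst g. f_equal. apply proof_irrelevance.
    + intros ->. apply Rle_antisym; [|apply delta_nonneg].
      apply Rnot_lt_le. intro Hlt.
      assert (Hs : Sd g g (delta x0 g g / 2)).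
      { split. lra. exists 0. split. lra. intros x _. rewrite Rminus_diag, Rabs_R0; lra. }
      pose proof (delta_le _ _ _ Hs). lra.
  - intros f g. rewrite !delta_eq. f_equal.
    apply functional_extensionality; intro e; apply propositional_extensionality.
    unfold Sd. split; intros [H1 [eta [H2 H3]]]; split; auto; exists eta; split; auto;
      intros x Hx; rewrite Rabs_minus_sym; auto.
  - intros f g h.
    apply Rnot_lt_le. intro Hlt.
    set (eps := (delta x0 f h - delta x0 f g - delta x0 g h) / 2).
    destruct (delta_lt f g (delta x0 f g + eps)) as [e1 [[He1 [eta1 [H11 H12]]] He1']]. unfold eps; lra.
    destruct (delta_lt g h (delta x0 g h + eps)) as [e2 [[He2 [eta2 [H21 H22]]] He2']]. unfold eps; lra.
    assert (Hs : Sd f h (e1 + e2)).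
    { split. lra. exists (eta1 + eta2). split. lra. intros x Hx.
      unfold open_ball in Hx.
      assert (/ (e1 + e2) <= / e1) by (apply Rinv_le_contravar; lra).
      assert (/ (e1 + e2) <= / e2) by (apply Rinv_le_contravar; lra).
      specialize (H12 x ltac:(unfold open_ball; lra)).
      specialize (H22 x ltac:(unfold open_ball; lra)).
      pose proof (Rabs_triang (Cfun_app f x - Cfun_app g x) (Cfun_app g x - Cfun_app h x)) as Ht.
      replace (Cfun_app f x - Cfun_app g x + (Cfun_app g x - Cfun_app h x))
        with (Cfun_app f x - Cfun_app h x) in Ht by ring. lra. }
    pose proof (delta_le _ _ _ Hs). unfold eps in *. lra.
Qed.

End MS.

Ltac absu := unfold Rabs in *; repeat match goal with
  | |- context [Rcase_abs ?x] => destruct (Rcase_abs x)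
  | H : context [Rcase_abs ?x] |- _ => destruct (Rcase_abs x) end; lra.

Section Approx.
Variable X : MetricSpace.

Definition minf (t : nat -> X) (k c : nat) (l : list (nat * nat)) (z : X) : R :=
  fold_right (fun p acc => Rmin (rq (snd p) + INR k * mdist X (t (fst p)) z) acc) (rq c) l.

Lemma minf_lip t k c l y z : Rabs (minf t k c l y - minf t k c l z) <= INR k * mdist X y z.
Proof.
  pose proof (pos_INR k) as Hk.
  induction l as [|p l IH]; simpl.
  - rewrite Rminus_diag, Rabs_R0. pose proof (d_pos X y z). nra.
  - pose proof (dist_lip X (t (fst p)) y z) as Hd.
    assert (Hd' : Rabs (INR k * mdist X (t (fst p)) y - INR k * mdist X (t (fst p)) z)
                  <= INR k * mdist X y z).
    { rewrite <- Rmult_minus_distr_l, Rabs_mult, (Rabs_pos_eq (INR k)); auto.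
      apply Rmult_le_compat_l; auto. }
    revert IH Hd'. generalize (minf t k c l y) (minf t k c l z).
    generalize (INR k * mdist X (t (fst p)) y) (INR k * mdist X (t (fst p)) z).
    intros a b u v H1 H2. unfold Rmin.
    destruct (Rle_dec _ _); destruct (Rle_dec _ _); absu.
Qed.

Lemma minf_cont t k c l : Defs.continuous (minf t k c l).
Proof.
  intros x e He. pose proof (pos_INR k).
  exists (e / (INR k + 1)). split. apply Rdiv_lt_0_compat; lra.
  intros y Hy. pose proof (minf_lip t k c l y x). rewrite d_sym in H0.
  apply Rle_lt_trans with (INR k * mdist X x y); auto.
  apply Rle_lt_trans with (INR k * (e / (INR k + 1))).
  apply Rmult_le_compat_l; auto; lra.
  unfold Rdiv. rewrite <- Rmult_assoc.
  apply Rlt_le_trans with ((INR k + 1) * e * / (INR k + 1)).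
  apply Rmult_lt_compat_r. apply Rinv_0_lt_compat; lra. nra.
  rewrite (Rmult_comm (INR k + 1) e), Rmult_assoc, Rinv_r; lra.
Qed.

Lemma minf_le_entry t k c l z p : In p l ->
  minf t k c l z <= rq (snd p) + INR k * mdist X (t (fst p)) z.
Proof.
  induction l as [|q l IH]; simpl; [tauto|].
  intros [->|Hp]. apply Rmin_l. eapply Rle_trans. apply Rmin_r. auto.
Qed.

Lemma minf_ge t k c l z v : v <= rq c ->
  (forall p, In p l -> v <= rq (snd p) + INR k * mdist X (t (fst p)) z) ->
  v <= minf t k c l z.
Proof.
  intros H0 H. induction l as [|q l IH]; simpl; auto.
  apply Rmin_glb. apply H; simpl; auto. apply IH. intros; apply H; simpl; auto.
Qed.

Lemma list_min_pos (l : list (X * R)) : exists d, 0 < d /\ forall p, In p l -> 0 < snd p -> d <= snd p / 2.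
Proof.
  induction l as [|p l [d [Hd H]]].
  - exists 1. split. lra. intros p [].
  - destruct (Rlt_dec 0 (snd p)).
    + exists (Rmin d (snd p / 2)). split. apply Rmin_glb_lt; lra.
      intros q [->|Hq] Hq0. apply Rmin_r. eapply Rle_trans. apply Rmin_l. auto.
    + exists d. split; auto. intros q [->|Hq] Hq0. lra. auto.
Qed.

Lemma unif_cont (g : X -> R) (C : X -> Prop) (e : R) : Defs.continuous g -> Defs.compact C -> 0 < e ->
  exists dl, 0 < dl /\ forall y z, C y -> mdist X y z < dl -> Rabs (g y - g z) < e.
Proof.
  intros Hg HC He.
  destruct (HC (X * R)%type (fun p z => 0 < snd p /\ C (fst p) /\ mdist X (fst p) z < snd p / 2 /\
      forall z', mdist X (fst p) z' < snd p -> Rabs (g z' - g (fst p)) < e / 2)) as [l Hl].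
  - intros [a r] z [H1 [H2 [H3 H4]]]; simpl in *. exists (r / 2 - mdist X a z). split. lra.
    intros y Hy. unfold open_ball in Hy. repeat split; auto.
    pose proof (d_tri X a z y). lra.
  - intros y Hy. destruct (Hg y (e / 2)) as [dl [Hdl H]]. lra.
    exists (y, dl); simpl. rewrite d_refl. repeat split; auto. lra.
  - destruct (list_min_pos l) as [d [Hd Hdl]]. exists d. split; auto.
    intros y z Hy Hyz. destruct (Hl y Hy) as [[a r] [Hin [H1 [H2 [H3 H4]]]]]; simpl in *.
    specialize (Hdl _ Hin H1); simpl in Hdl.
    pose proof (d_tri X a y z).
    pose proof (H4 y ltac:(lra)). pose proof (H4 z ltac:(lra)). absu.
Qed.

Lemma choose_list (P : nat -> nat -> Prop) (ln : list nat) :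
  (forall n, In n ln -> exists j, P n j) ->
  exists l, (forall n, In n ln -> exists j, In (n, j) l) /\ (forall p, In p l -> P (fst p) (snd p)).
Proof.
  induction ln as [|n ln IH]; intros H.
  - exists nil. split; intros ? [].
  - destruct IH as [l [H1 H2]]. intros; apply H; simpl; auto.
    destruct (H n) as [j Hj]; simpl; auto.
    exists ((n, j) :: l). split.
    + intros m [->|Hm]. exists j; simpl; auto. destruct (H1 m Hm) as [j' Hj']. exists j'; simpl; auto.
    + intros p [<-|Hp]; simpl; auto.
Qed.

Hypothesis Hprop : proper X.
Variable x0 : X.
Variable t : nat -> X.
Hypothesis Hdense : forall x e, 0 < e -> exists n, mdist X (t n) x < e.

Lemma approx (g : X -> R) (Rr eps : R) : Defs.continuous g -> 0 < Rr -> 0 < eps ->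
  exists k c l, forall z, mdist X x0 z < Rr -> Rabs (minf t k c l z - g z) <= 3 * eps.
Proof.
  intros Hg HR He.
  set (C' := closed_ball x0 (Rr + 1)).
  destruct (cont_bounded X g C' Hg (Hprop x0 (Rr + 1))) as [M [HM HMb]].
  destruct (unif_cont g C' eps Hg (Hprop x0 (Rr + 1)) He) as [dl [Hdl Hu]].
  destruct (nat_large ((2 * M + 2 * eps) / dl)) as [k Hk].
  assert (Hkd : 2 * M + 2 * eps < INR k * dl).
  { apply Rmult_lt_compat_r with (r := dl) in Hk; auto.
    unfold Rdiv in Hk. rewrite Rmult_assoc, Rinv_l in Hk; lra. }
  pose proof (pos_INR k) as Hk0.
  set (dl' := Rmin dl (Rmin 1 (eps / (INR k + 1)))).
  assert (Hd1 : dl' <= dl) by apply Rmin_l.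
  assert (Hd2 : dl' <= 1) by (eapply Rle_trans; [apply Rmin_r|apply Rmin_l]).
  assert (Hd3 : dl' <= eps / (INR k + 1)) by (eapply Rle_trans; [apply Rmin_r|apply Rmin_r]).
  assert (Hd0 : 0 < dl').
  { apply Rmin_glb_lt; auto. apply Rmin_glb_lt. lra. apply Rdiv_lt_0_compat; lra. }
  assert (HKd : INR k * dl' < eps).
  { apply Rle_lt_trans with (INR k * (eps / (INR k + 1))). apply Rmult_le_compat_l; auto.
    unfold Rdiv. rewrite <- Rmult_assoc.
    apply Rlt_le_trans with ((INR k + 1) * eps * / (INR k + 1)).
    apply Rmult_lt_compat_r. apply Rinv_0_lt_compat; lra. nra.
    rewrite (Rmult_comm (INR k + 1) eps), Rmult_assoc, Rinv_r; lra. }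
  destruct (Hprop x0 Rr nat (fun n z => mdist X (t n) z < dl')) as [ln Hln].
  - intros n z Hz. exists (dl' - mdist X (t n) z). split. lra.
    intros y Hy. unfold open_ball in Hy. pose proof (d_tri X (t n) z y). lra.
  - intros z _. apply Hdense; auto.
  - destruct (choose_list (fun n j => (C' (t n) -> Rabs (rq j - g (t n)) < eps) /\
                                    (~ C' (t n) -> M <= rq j)) ln) as [l [Hl1 Hl2]].
    { intros n _. destruct (classic (C' (t n))) as [Hc|Hc].
      - destruct (rq_dense (g (t n)) eps He) as [j Hj]. exists j. split; auto. tauto.
      - destruct (rq_dense (M + eps) eps He) as [j Hj]. exists j. split. tauto.
        intros _. absu. }
    destruct (rq_dense (M + eps) eps He) as [c Hc].
    exists k, c, l. intros z Hz.
    assert (HzC : C' z). { unfold C', closed_ball. lra. }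
    pose proof (HMb z HzC) as Hgz.
    apply Rabs_le. split.
    +
      assert (g z - 2 * eps <= minf t k c l z); [|lra].
      apply minf_ge. absu.
      intros [n j] Hp. specialize (Hl2 _ Hp). simpl in *. destruct Hl2 as [Hl2 Hl3].
      pose proof (d_pos X (t n) z) as Hdp.
      destruct (classic (C' (t n))) as [Hc'|Hc'].
      * specialize (Hl2 Hc').
        destruct (Rlt_dec (mdist X (t n) z) dl) as [Hlt|Hge].
        -- pose proof (Hu _ _ Hc' Hlt). assert (0 <= INR k * mdist X (t n) z) by nra. absu.
        -- assert (INR k * dl <= INR k * mdist X (t n) z) by (apply Rmult_le_compat_l; lra).
           pose proof (HMb _ Hc'). absu.
      * specialize (Hl3 Hc'). assert (0 <= INR k * mdist X (t n) z) by nra. absu.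
    +
      assert (minf t k c l z <= g z + 3 * eps); [|lra].
      assert (Hz' : closed_ball x0 Rr z) by (unfold closed_ball; lra).
      destruct (Hln z Hz') as [n [Hn Hnz]].
      destruct (Hl1 n Hn) as [j Hj].
      pose proof (minf_le_entry t k c l z (n, j) Hj) as Hm. simpl in Hm.
      destruct (Hl2 _ Hj) as [Hl3 _]. simpl in Hl3.
      assert (Hc' : C' (t n)).
      { unfold C', closed_ball. pose proof (d_tri X x0 z (t n)) as Ht. rewrite (d_sym X z (t n)) in Ht. lra. }
      specialize (Hl3 Hc').
      assert (Hnz' : mdist X (t n) z < dl) by lra. pose proof (Hu _ _ Hc' Hnz').
      assert (INR k * mdist X (t n) z <= INR k * dl') by (apply Rmult_le_compat_l; lra).
      absu.
Qed.

End Approx.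

Fixpoint decl (fuel m : nat) : list (nat * nat) :=
  match fuel with
  | 0%nat => nil
  | S f => match m with
           | 0%nat => nil
           | S x => Cantor.of_nat (fst (Cantor.of_nat x)) :: decl f (snd (Cantor.of_nat x))
           end
  end.

Definition declist (q : nat) : list (nat * nat) := decl (fst (Cantor.of_nat q)) (snd (Cantor.of_nat q)).

Lemma declist_surj (l : list (nat * nat)) : exists q, declist q = l.
Proof.
  unfold declist.
  induction l as [|h t [q Hq]].
  - exists (Cantor.to_nat (0, 0)%nat). rewrite Cantor.cancel_of_to. reflexivity.
  - destruct (Cantor.of_nat q) as [f m] eqn:E. simpl in Hq.
    exists (Cantor.to_nat (S f, S (Cantor.to_nat (Cantor.to_nat h, m)))).
    rewrite Cantor.cancel_of_to. cbn [decl fst snd]. rewrite !Cantor.cancel_of_to. cbn [fst snd]. rewrite Cantor.cancel_of_to. congruence.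
Qed.

Definition dec (n : nat) : nat * nat * list (nat * nat) :=
  (fst (Cantor.of_nat n), fst (Cantor.of_nat (snd (Cantor.of_nat n))),
   declist (snd (Cantor.of_nat (snd (Cantor.of_nat n))))).

Lemma dec_surj k c l : exists n, dec n = (k, c, l).
Proof.
  destruct (declist_surj l) as [q Hq]. exists (Cantor.to_nat (k, Cantor.to_nat (c, q))).
  unfold dec. rewrite !Cantor.cancel_of_to. cbn [fst snd]. rewrite !Cantor.cancel_of_to. cbn [fst snd]. congruence.
Qed.

Lemma cfun_diff_cont (X : MetricSpace) (f g : Cfun X) :
  Defs.continuous (fun z => Cfun_app f z - Cfun_app g z).
Proof.
  intros z e He. destruct (proj2_sig f z (e/2)) as [d1 [Hd1 H1]]. lra.
  destruct (proj2_sig g z (e/2)) as [d2 [Hd2 H2]]. lra.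
  exists (Rmin d1 d2). split. apply Rmin_glb_lt; auto.
  intros y Hy. specialize (H1 y). specialize (H2 y).
  assert (Hy1 : mdist X z y < d1) by (apply Rlt_le_trans with (Rmin d1 d2); auto; apply Rmin_l).
  assert (Hy2 : mdist X z y < d2) by (apply Rlt_le_trans with (Rmin d1 d2); auto; apply Rmin_r).
  specialize (H1 Hy1). specialize (H2 Hy2). unfold Cfun_app in *. absu.
Qed.

Lemma cont_sub_const (X : MetricSpace) (f : Cfun X) (a : R) :
  Defs.continuous (fun z => Cfun_app f z - a).
Proof.
  intros z e He. destruct (proj2_sig f z e He) as [d1 [Hd1 H1]].
  exists d1. split; auto. intros y Hy. specialize (H1 y Hy). unfold Cfun_app in *.
  replace (proj1_sig f y - a - (proj1_sig f z - a)) with (proj1_sig f y - proj1_sig f z) by ring. auto.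
Qed.

Lemma dense_bound (X : MetricSpace) (t : nat -> X)
  (Hd : forall x e, 0 < e -> exists n, mdist X (t n) x < e)
  (h : X -> R) (Hh : Defs.continuous h) (x0 : X) (r b : R) :
  (forall n, mdist X x0 (t n) < r -> Rabs (h (t n)) <= b) ->
  forall x, mdist X x0 x < r -> Rabs (h x) <= b.
Proof.
  intros H x Hx. apply Rnot_lt_le. intro Hb.
  destruct (Hh x (Rabs (h x) - b)) as [dl [Hdl Hc]]. lra.
  destruct (Hd x (Rmin dl (r - mdist X x0 x))) as [n Hn].
  apply Rmin_glb_lt; lra.
  assert (H1 : mdist X (t n) x < dl) by (eapply Rlt_le_trans; [exact Hn|apply Rmin_l]).
  assert (H2 : mdist X (t n) x < r - mdist X x0 x) by (eapply Rlt_le_trans; [exact Hn|apply Rmin_r]).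
  rewrite d_sym in H1.
  specialize (Hc _ H1).
  pose proof (d_tri X x0 x (t n)). rewrite (d_sym X x (t n)) in H0.
  specialize (H n ltac:(lra)).
  pose proof (Rabs_triang_inv (h x) (h (t n))). rewrite Rabs_minus_sym in Hc. lra.
Qed.

Lemma inv_mono (m k : nat) : (m <= k)%nat -> / (INR k + 1) <= / (INR m + 1).
Proof.
  intros H. apply le_INR in H. pose proof (pos_INR m).
  apply Rinv_le_contravar; lra.
Qed.

Lemma A_imp {O : Type} {A : (O -> Prop) -> Prop} (HA : sigma_algebra A) P Q :
  A P -> A Q -> A (fun w => P w -> Q w).
Proof.
  intros HP HQ. apply (A_ext (fun w => ~ P w \/ Q w)).
  intro w; tauto. apply A_or; auto. apply A_compl; auto.
Qed.

Section Main.
Variables (O : Type) (A : (O -> Prop) -> Prop) (HA : sigma_algebra A).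
Variables (X : O -> MetricSpace) (Hproper : forall w, proper (X w)).
Variable L : section (fun w => carrier (X w)) -> Prop.
Hypothesis HLa : forall x y, L x -> L y -> borel_fun A (fun w => mdist (X w) (x w) (y w)).
Variable x0 : section (fun w => carrier (X w)).
Hypothesis Hx0 : L x0.
Variable s : nat -> section (fun w => carrier (X w)).
Hypothesis HsL : forall n, L (s n).
Hypothesis Hsd : forall w x e, 0 < e -> exists n, mdist (X w) (s n w) x < e.

Definition LC (f : section (fun w => Cfun (X w))) : Prop :=
  forall x : section (fun w => carrier (X w)), L x -> borel_fun A (fun w => Cfun_app (f w) (x w)).

Definition Fcode (k c : nat) (l : list (nat * nat)) : section (fun w => Cfun (X w)) :=
  fun w => exist _ (minf (X w) (fun i => s i w) k c l) (minf_cont (X w) (fun i => s i w) k c l).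

Definition F (n : nat) : section (fun w => Cfun (X w)) :=
  Fcode (fst (fst (dec n))) (snd (fst (dec n))) (snd (dec n)).

Lemma F_surj k c l : exists n, F n = Fcode k c l.
Proof. destruct (dec_surj k c l) as [n Hn]. exists n. unfold F. rewrite Hn. reflexivity. Qed.

Lemma Fcode_LC k c l : LC (Fcode k c l).
Proof.
  intros x Hx. apply SM_borel; auto. unfold Fcode, Cfun_app; simpl.
  induction l as [|p l IH]; unfold minf in *; simpl.
  - exact (SM_const O A HA (rq c)).
  - apply SM_min; auto.
    apply SM_plus; auto. apply (SM_const O A HA). apply SM_scal; auto. apply pos_INR.
    apply borel_SM. apply HLa; auto.
Qed.

Lemma F_LC n : LC (F n).
Proof. apply Fcode_LC. Qed.

Lemma F_dense w (g : Cfun (X w)) e : 0 < e -> exists n, delta (x0 w) (F n w) g < e.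
Proof.
  intros He.
  destruct (approx (X w) (Hproper w) (x0 w) (fun i => s i w) (Hsd w) (Cfun_app g) (2 / e) (e / 8))
    as [k [c [l Hkcl]]].
  apply (proj2_sig g). apply Rdiv_lt_0_compat; lra. lra.
  destruct (F_surj k c l) as [n Hn]. exists n. rewrite Hn.
  apply Rle_lt_trans with (e / 2); [|lra].
  apply delta_le; auto.
  split. lra. exists (3 * (e / 8)). split. lra.
  intros x Hx. unfold open_ball in Hx. apply Hkcl.
  replace (2 / e) with (/ (e / 2)) by (field; lra). auto.
Qed.

Lemma delta_borel f g : LC f -> LC g -> borel_fun A (fun w => delta (x0 w) (f w) (g w)).
Proof.
  intros Hf Hg. apply SM_borel; auto. intro c.
  apply (A_ext (fun w => exists i j : nat, (rq j < rq i /\ rq i < c /\ 0 < rq i) /\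
     forall n, mdist (X w) (x0 w) (s n w) < / rq i ->
       Rabs (Cfun_app (f w) (s n w) - Cfun_app (g w) (s n w)) <= rq j)).
  - intro w; split.
    + intros [i [j [[H1 [H2 H3]] H4]]].
      apply Rle_lt_trans with (rq i); auto. apply delta_le; auto.
      split; auto. exists (rq j). split; auto.
      apply (dense_bound (X w) (fun n => s n w) (Hsd w)
               (fun z => Cfun_app (f w) z - Cfun_app (g w) z) (cfun_diff_cont _ _ _) (x0 w)).
      auto.
    + intros Hw. destruct (delta_lt (X w) (x0 w) (Hproper w) _ _ _ Hw) as [e [[He [eta [H1 H2]]] Hec]].
      destruct (rq_dense ((e + c) / 2) ((c - e) / 2)) as [i Hi]. lra.
      destruct (rq_dense ((eta + e) / 2) ((e - eta) / 2)) as [j Hj]. lra.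
      apply Rabs_def2 in Hi. apply Rabs_def2 in Hj.
      exists i, j. split. lra. intros n Hn.
      apply Rle_trans with eta; [|lra]. apply H2. unfold open_ball.
      apply Rlt_le_trans with (/ rq i); auto. apply Rinv_le_contravar; lra.
  - apply (A_ex HA); intro i; apply (A_ex HA); intro j. apply (A_and_const HA).
    apply (A_all HA); intro n. apply A_imp; auto.
    + apply borel_SM; auto.
    + apply SM_le; auto. apply SM_abs; auto. apply SM_plus; auto.
      apply borel_SM; auto. apply SM_opp; auto. apply borel_SM; auto.
Qed.

Lemma maximal (y : section (fun w => Cfun (X w))) :
  (forall f, LC f -> borel_fun A (fun w => delta (x0 w) (f w) (y w))) -> LC y.
Proof.
  intros Hy x Hx. apply SM_borel; auto. intro c.
  apply (A_ext (fun w => exists k m : nat,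
     delta (x0 w) (F m w) (y w) < / (INR k + 1) /\
     Cfun_app (F m w) (x w) < c - 2 * / (INR k + 1) /\
     mdist (X w) (x0 w) (x w) < INR k + 1)).
  - intro w; split.
    + intros [k [m [H1 [H2 H3]]]].
      pose proof (pos_INR k).
      assert (Hx' : mdist (X w) (x0 w) (x w) < / / (INR k + 1)) by (rewrite Rinv_inv; auto).
      pose proof (delta_close (X w) (x0 w) (Hproper w) _ _ _ H1 _ Hx').
      assert (0 < / (INR k + 1)) by (apply Rinv_0_lt_compat; lra).
      absu.
    + intros Hw.
      destruct (inv_small ((c - Cfun_app (y w) (x w)) / 3)) as [m1 Hm1]. lra.
      destruct (nat_large (mdist (X w) (x0 w) (x w))) as [m2 Hm2].
      set (k := Nat.max m1 m2).
      assert (Hk1 : / (INR k + 1) <= / (INR m1 + 1)) by (apply inv_mono; lia).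
      assert (Hk2 : INR m2 <= INR k) by (apply le_INR; lia).
      assert (Hk0 : 0 < / (INR k + 1)) by (apply Rinv_0_lt_compat; pose proof (pos_INR k); lra).
      destruct (F_dense w (y w) (/ (INR k + 1)) Hk0) as [m Hm].
      exists k, m. split; auto. split; [|lra].
      assert (Hx' : mdist (X w) (x0 w) (x w) < / / (INR k + 1)) by (rewrite Rinv_inv; lra).
      pose proof (delta_close (X w) (x0 w) (Hproper w) _ _ _ Hm _ Hx').
      absu.
  - apply (A_ex HA); intro k; apply (A_ex HA); intro m.
    apply A_and; auto. apply borel_SM. apply Hy. apply F_LC.
    apply A_and; auto. apply borel_SM. apply F_LC; auto.
    apply borel_SM. apply HLa; auto.
Qed.

End Main.

Lemma dense_seq (O : Type) (T : O -> Type) (d : forall w, T w -> T w -> R)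
  (L : section T -> Prop) (x0 : section T) (Hx0 : L x0) (D : section T -> Prop) :
  countable_set D -> (forall s, D s -> L s) ->
  (forall w (x : T w) e, 0 < e -> exists s, D s /\ d w (s w) x < e) ->
  exists s : nat -> section T, (forall n, L (s n)) /\
    forall w x e, 0 < e -> exists n, d w (s n w) x < e.
Proof.
  intros [c0 Hc0] HDL HDd.
  set (P := fun n (t : section T) => (D t /\ c0 t = n) \/ (~ (exists t, D t /\ c0 t = n) /\ t = x0)).
  assert (HP : forall n, P n (epsilon (inhabits x0) (P n))).
  { intro n. apply epsilon_spec. destruct (classic (exists t, D t /\ c0 t = n)) as [[t Ht]|Hn].
    exists t; left; auto. exists x0; right; auto. }
  exists (fun n => epsilon (inhabits x0) (P n)). split.
  - intro n. destruct (HP n) as [[H1 _]|[_ ->]]; auto.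
  - intros w x e He. destruct (HDd w x e He) as [t [Ht Htd]].
    exists (c0 t). destruct (HP (c0 t)) as [[H1 H2]|[H1 _]].
    + rewrite (Hc0 _ _ H1 Ht H2). auto.
    + exfalso; apply H1; eauto.
Qed.

Lemma cont_zero (X : MetricSpace) : Defs.continuous (fun _ : X => 0).
Proof. intros x e He. exists 1. split. lra. intros. rewrite Rminus_diag, Rabs_R0; auto. Qed.

Theorem mainTheorem6
  (O : Type) (A : (O -> Prop) -> Prop) (HA : sigma_algebra A)
  (X : O -> MetricSpace) (Hproper : forall w, proper (X w))
  (L : section (fun w => carrier (X w)) -> Prop)
  (HL : is_borel_structure A (fun w => mdist (X w)) L)
  (x0 : section (fun w => carrier (X w))) (Hx0 : L x0) :
  (forall w, is_metric (delta (x0 w))) /\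
  is_borel_structure A (fun w => delta (x0 w))
    (fun f : section (fun w => Cfun (X w)) =>
       forall x : section (fun w => carrier (X w)), L x -> borel_fun A (fun w => Cfun_app (f w) (x w))) /\
  borel_subfield A (fun w => delta (x0 w))
    (fun f : section (fun w => Cfun (X w)) =>
       forall x : section (fun w => carrier (X w)), L x -> borel_fun A (fun w => Cfun_app (f w) (x w)))
    (fun w (f : Cfun (X w)) => Cfun_app f (x0 w) = 0).
Proof.
  destruct HL as [HLa [HLb [D0 [HD0c [HD0L HD0d]]]]].
  destruct (dense_seq O (fun w => carrier (X w)) (fun w => mdist (X w)) L x0 Hx0 D0 HD0c HD0L HD0d)
    as [s [HsL Hsd]].
  split; [|split; [split; [|split]|]].
  - intro w. apply delta_metric; auto.
  - intros f g Hf Hg. apply (delta_borel O A HA X Hproper L HLa x0 Hx0 s HsL Hsd); auto.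
  - intros y Hy. apply (maximal O A HA X Hproper L HLa x0 Hx0 s HsL Hsd); auto.
  - exists (fun f => exists n, f = F O X s n). split; [|split].
    + exists (fun f => epsilon (inhabits 0%nat) (fun n => f = F O X s n)).
      intros f g Hf Hg Hfg.
      pose proof (epsilon_spec (inhabits 0%nat) (fun n => f = F O X s n) Hf).
      pose proof (epsilon_spec (inhabits 0%nat) (fun n => g = F O X s n) Hg).
      simpl in *. rewrite H, H0, Hfg. reflexivity.
    + intros f [n ->]. apply (F_LC O A HA X L HLa s HsL).
    + intros w g e He. destruct (F_dense O X Hproper x0 s Hsd w g e He) as [n Hn].
      exists (F O X s n). split; eauto.
  - split.
    + apply (A_ext (fun _ => True)). intro w; split; auto. intros _.
      exists (exist _ (fun _ => 0) (cont_zero (X w))). reflexivity.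
      apply A_True; auto.
    + exists (fun n w => exist _ (fun z => Cfun_app (F O X s n w) z - Cfun_app (F O X s n w) (x0 w))
                      (cont_sub_const _ (F O X s n w) (Cfun_app (F O X s n w) (x0 w)))).
      split.
      * intros n x Hx. apply SM_borel; auto. unfold Cfun_app at 1; simpl.
        apply SM_plus; auto. apply borel_SM. apply (F_LC O A HA X L HLa s HsL); auto.
        apply SM_opp; auto. apply borel_SM. apply (F_LC O A HA X L HLa s HsL); auto.
      * intros w _. split.
        -- intro n. unfold Cfun_app at 1; simpl. ring.
        -- intros a Ha e He.
           destruct (F_dense O X Hproper x0 s Hsd w a (e / 2)) as [m Hm]. lra.
           destruct (delta_lt (X w) (x0 w) (Hproper w) _ _ _ Hm) as [e' [[He' [eta [H1 H2]]] He'2]].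
           exists m. apply Rle_lt_trans with (2 * e'); [|lra].
           apply delta_le; auto. split. lra. exists (2 * eta). split. lra.
           intros x Hx.
           change (Rabs (Cfun_app (F O X s m w) x - Cfun_app (F O X s m w) (x0 w) - Cfun_app a x) <= 2 * eta).
           assert (Hxb : open_ball (x0 w) (/ e') x).
           { unfold open_ball in *. apply Rlt_le_trans with (/ (2 * e')); auto.
             apply Rinv_le_contravar; lra. }
           assert (H0b : open_ball (x0 w) (/ e') (x0 w)).
           { unfold open_ball. rewrite d_refl. apply Rinv_0_lt_compat; auto. }
           pose proof (H2 x Hxb) as A1. pose proof (H2 (x0 w) H0b) as A2.
           rewrite Ha in A2. absu.
Qed.
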